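(* Let $C: f=0$ be a reduced plane curve of degree $d\geq 3$ in $\mathbb{P}^2$ of type $(d,r,m)$ with $m>3$, and suppose $\Delta m:=(2r-d+3)-m=3$. Then, with $\epsilon_1,\ldots,\epsilon_{m-2}$ as in the context, one of the following holds: (1) $\epsilon_{m-2}=4$, $\epsilon_j=1$ for $1\leq j\leq m-3$, and $\tau(C)=\frac{d(d-1)}{2}-6+r(d-r-2)$; (2) $\epsilon_{m-2}=3$, $\epsilon_{m-3}=2$, $\epsilon_j=1$ for $1\leq j\leq m-4$, and $\tau(C)=\frac{d(d-1)}{2}-4+r(d-r-2)$; (3) $\epsilon_{m-2}=\epsilon_{m-3}=\epsilon_{m-4}=2$, $\epsilon_j=1$ for $1\leq j\leq m-5$, and $\tau(C)=\frac{d(d-1)}{2}-3+r(d-r-2)$.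
   Context: Let $S=\mathbb{C}[x,y,z]$, let $f\in S$ be a reduced homogeneous polynomial of degree $d\geq 3$ defining $C$, and assume $C$ is not a union of $d$ lines through one point. Let $J_f=(f_x,f_y,f_z)$ and $M(f)=S/J_f$. Let $D_0(f)=\{(a,b,c)\in S^3: af_x+bf_y+cf_z=0\}$. The curve is of type $(d,r,m)$ if $D_0(f)$ is minimally generated by $m$ homogeneous elements all of degree $r$. When $m\geq 3$, the minimal graded free resolution of $M(f)$ has the form $$0\to \bigoplus_{i=1}^{m-2}S(-e_i)\to \bigoplus_{j=1}^m S(1-d-r)\to S^3(1-d)\to S,$$ with $e_1\leq\cdots\leq e_{m-2}$, and one writes $e_j=d+r-1+\epsilon_j$ with integers $\epsilon_j\geq 1$. The total Tjurina number $\tau(C)$ is the degree of $J_f$, i.e. the sum of the Tjurina numbers of the singular points of $C$. *)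

(* Defs.v *)
From HB Require Import structures.
From mathcomp Require Import all_boot all_algebra.
From mathcomp Require Import reals complex.
From mathcomp Require Import mpoly.

Unset Printing Implicit Defensive.

Import GRing.Theory.
Local Open Scope ring_scope.

(* Plane curves C : f = 0 with f in S = F[x,y,z] = {mpoly F[3]},
   variables x,y,z = 'X_0,'X_1,'X_2.  The theorem is stated for F = C,
   realized as R[i] for an arbitrary realType R. *)

Section CurveDefs.
Context {F : fieldType}.
Local Notation S := {mpoly F[3]}.

Definition reduced (f : S) : Prop :=
  f != 0 /\ forall g h : S, f = g * g * h -> (msize g <= 1)%N.

Definition lines_through_point (f : S) (d : nat) : Prop :=
  exists p : 'I_3 -> F, (exists t, p t != 0) /\
  exists l : 'I_d -> S,
    (forall i, l i \is 1.-homog) /\ (forall i, (l i).@[p] = 0) /\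
    f = \prod_(i < d) l i.

Definition hom_vec {n : nat} (k : nat) (v : 'I_n -> S) : Prop :=
  forall t, v t \is k.-homog.

Definition in_submod {n k : nat} (g : 'I_k -> 'I_n -> S) (v : 'I_n -> S) :=
  exists h : 'I_k -> S, forall t, v t = \sum_(j < k) h j * g j t.

Definition generates {n k : nat} (P : ('I_n -> S) -> Prop)
  (g : 'I_k -> 'I_n -> S) : Prop :=
  (forall j, P (g j)) /\ (forall v, P v -> in_submod g v).

Definition irredundant {n k : nat} (g : 'I_k -> 'I_n -> S) : Prop :=
  forall i : 'I_k, ~ exists h : 'I_k -> S,
      h i = 0 /\ forall t, g i t = \sum_(j < k) h j * g j t.

Definition D0 (f : S) (v : 'I_3 -> S) : Prop :=
  \sum_(t < 3) v t * mderiv t f = 0.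

Definition min_gens_D0 (f : S) (r m : nat) (rho : 'I_m -> 'I_3 -> S) : Prop :=
  generates (D0 f) rho /\ irredundant rho /\ forall j, hom_vec r (rho j).

Definition curve_type (f : S) (d r m : nat) : Prop :=
  f \is d.-homog /\ exists rho, min_gens_D0 f r m rho.

Definition syz {n k : nat} (g : 'I_k -> 'I_n -> S) (s : 'I_k -> S) : Prop :=
  forall t, \sum_(j < k) s j * g j t = 0.

Definition in_jac (f : S) (p : S) : Prop :=
  exists g : 'I_3 -> S, p = \sum_(t < 3) g t * mderiv t f.

(* dim_F (S/J_f)_k = n : there are n forms of degree k whose classes form
   a basis of (S/J_f)_k *)
Definition quot_dim (f : S) (k n : nat) : Prop :=
  exists q : 'I_n -> S,
    (forall i, q i \is k.-homog) /\
    (forall p : S, p \is k.-homog ->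
       exists c : 'I_n -> F, in_jac f (p - \sum_(i < n) c i *: q i)) /\
    (forall c : 'I_n -> F, in_jac f (\sum_(i < n) c i *: q i) ->
       forall i, c i = 0).

(* total Tjurina number = degree of J_f = eventual value of the Hilbert
   function of M(f) = S/J_f *)
Definition tjurina_number (f : S) (tau : nat) : Prop :=
  exists k0, forall k, (k0 <= k)%N -> quot_dim f k tau.

End CurveDefs.

(* Main.v *)
Require Import Defs.
From HB Require Import structures.
From mathcomp Require Import all_boot all_algebra.
From mathcomp Require Import reals complex.
From mathcomp Require Import mpoly.
From mathcomp Require Import zify.
From Stdlib Require Import Classical_Prop.

Section Comb.
Variable e : nat -> nat.

Lemma sum_le k c : (forall j, j < k -> e j <= c) -> \sum_(0 <= j < k) e j <= k * c.
Proof.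
elim: k => [|k IH] h; first by rewrite big_geq.
rewrite big_nat_recr //= mulSn addnC leq_add //; first exact: h.
by apply: IH => j hj; apply: h; lia.
Qed.

Lemma sum_ge k : (forall j, j < k -> 1 <= e j) -> k <= \sum_(0 <= j < k) e j.
Proof.
elim: k => [|k IH] h; first by [].
rewrite big_nat_recr //= -addn1 leq_add //; last exact: h.
by apply: IH => j hj; apply: h; lia.
Qed.

Lemma all_one k : (forall j, j < k -> 1 <= e j) -> \sum_(0 <= j < k) e j = k ->
  forall j, j < k -> e j = 1.
Proof.
elim: k => [|k IH] h hs j hj; first by [].
move: hs; rewrite big_nat_recr //= => hs.
have h1 : k <= \sum_(0 <= j < k) e j by apply: sum_ge => i hi; apply: h; lia.
have h2 := h k (ltnSn k).
have hk : e k = 1 by lia.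
case: (ltngtP j k) => [jk|kj|->] //; last by lia.
apply: IH => //; [by move=> i hi; apply: h; lia | lia].
Qed.

Lemma sum_sq_one k : (forall j, j < k -> e j = 1) -> \sum_(0 <= j < k) e j ^ 2 = k.
Proof.
move=> h; rewrite (eq_big_nat _ _ (F2 := fun _ => 1)); last first.
  by move=> i /andP [_ hi]; rewrite h.
by rewrite sum_nat_const_nat muln1 subn0.
Qed.

Lemma comb n : 2 <= n -> (forall i j, i <= j -> j < n -> e i <= e j) ->
  (forall j, j < n -> 1 <= e j) -> \sum_(0 <= j < n) e j = n + 3 ->
  (e (n - 1) = 4 /\ (forall j, j < n - 1 -> e j = 1)
     /\ \sum_(0 <= j < n) e j ^ 2 = n + 15)
  \/ (e (n - 1) = 3 /\ e (n - 2) = 2 /\ (forall j, j < n - 2 -> e j = 1)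
     /\ \sum_(0 <= j < n) e j ^ 2 = n + 11)
  \/ (3 <= n /\ e (n - 1) = 2 /\ e (n - 2) = 2 /\ e (n - 3) = 2
     /\ (forall j, j < n - 3 -> e j = 1) /\ \sum_(0 <= j < n) e j ^ 2 = n + 9).
Proof.
case: n => [|[|n]] //= _ hmon hpos hsum.
rewrite !subSS !subn0 subn1 /=.
move: hsum; rewrite big_nat_recr //= => hsum.
rewrite big_nat_recr //=.
have hx1 := hpos n.+1 (ltnSn _).
have hge1 : n.+1 <= \sum_(0 <= j < n.+1) e j by apply: sum_ge => j hj; apply: hpos; lia.
have hlex j : j < n.+1 -> e j <= e n.+1 by move=> hj; apply: hmon; lia.
have hle1 : \sum_(0 <= j < n.+1) e j <= n.+1 * e n.+1 by apply: sum_le.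
case Ex: (e n.+1) => [|[|[|[|[|x]]]]]; rewrite Ex in hsum hle1 hx1; try lia.
-
  right; right.
  move: hsum; rewrite big_nat_recr //= => hsum.
  have hy1 := hpos n (ltnW (ltnSn _)).
  have hley : e n <= 2 by rewrite -Ex; apply: hmon; lia.
  have hlej j : j < n -> e j <= e n by move=> hj; apply: hmon; lia.
  have hle2 : \sum_(0 <= j < n) e j <= n * e n by apply: sum_le.
  have hy : e n = 2 by case Ey: (e n) => [|[|[|y]]]; rewrite Ey in hle2 hsum hy1 hley; lia.
  rewrite hy in hsum.
  clear hge1 hle1.
  case: n hmon hpos hlex hy1 hley hlej hle2 hy hsum Ex => [|n] hmon hpos hlex hy1 hley hlej hle2 hy hsum Ex.
    by rewrite big_geq in hsum.
  move: hsum; rewrite big_nat_recr //= => hsum.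
  have hz1 := hpos n (ltnW (ltnW (ltnSn _))).
  have hlez : e n <= 2 by rewrite -hy; apply: hmon; lia.
  have hlek j : j < n -> e j <= e n by move=> hj; apply: hmon; lia.
  have hle3 : \sum_(0 <= j < n) e j <= n * e n by apply: sum_le.
  have hz : e n = 2 by case Ez: (e n) => [|[|[|z]]]; rewrite Ez in hle3 hsum hz1 hlez; lia.
  rewrite hz in hsum.
  have hall : forall j, j < n -> e j = 1.
    apply: all_one; [by move=> j hj; apply: hpos; lia | lia].
  split; first by []. split; first by []. split; first by []. split; first by [].
  split; first exact: hall.
  rewrite !big_nat_recr //= sum_sq_one // hy hz; lia.
-
  right; left.
  move: hsum; rewrite big_nat_recr //= => hsum.
  have hy1 := hpos n (ltnW (ltnSn _)).
  have hley : e n <= 3 by rewrite -Ex; apply: hmon; lia.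
  have hlej j : j < n -> e j <= e n by move=> hj; apply: hmon; lia.
  have hle2 : \sum_(0 <= j < n) e j <= n * e n by apply: sum_le.
  have hge2 : n <= \sum_(0 <= j < n) e j by apply: sum_ge => j hj; apply: hpos; lia.
  have hy : e n = 2 by case Ey: (e n) => [|[|[|[|y]]]]; rewrite Ey in hle2 hsum hy1 hley; lia.
  rewrite hy in hsum.
  have hall : forall j, j < n -> e j = 1.
    apply: all_one; [by move=> j hj; apply: hpos; lia | lia].
  split; first by []. split; first by []. split; first exact: hall.
  rewrite !big_nat_recr //= sum_sq_one // hy; lia.
-
  left.
  have hall : forall j, j < n.+1 -> e j = 1.
    apply: all_one; [by move=> j hj; apply: hpos; lia | lia].
  split; first by []. split; first exact: hall.
  rewrite sum_sq_one //; lia.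
Qed.

End Comb.

Import GRing.Theory.
Local Open Scope ring_scope.

Section Poly.
Variable F : fieldType.
Local Notation S := {mpoly F[3]}.

Lemma pihomogM (k e : nat) (g h : S) : h \is e.-homog ->
  pihomog mdeg k (g * h) = if (e <= k)%N then pihomog mdeg (k - e) g * h else 0.
Proof.
move=> hh.
rewrite {1}(mpolyE g) mulr_suml linear_sum /=.
have hX mm : 'X_[mm] * h \is (mdeg mm + e).-homog.
  by apply: dhomogM => //; rewrite dhomogX.
case: ifP => lek.
  rewrite [in RHS](mpolyE g) linear_sum mulr_suml /=; apply: eq_bigr => mm _.
  rewrite -scalerAl !linearZ /= pihomogX.
  case: (eqVneq (mdeg mm + e)%N k) => E.
    rewrite pihomog_dE; last by rewrite -E.
    have -> : (mdeg mm == k - e)%N by apply/eqP; lia.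
    by rewrite scalerAl.
  rewrite (pihomog_ne0 E (hX mm)).
  have -> : (mdeg mm == k - e)%N = false by apply/negbTE/eqP; lia.
  by rewrite scaler0 mul0r.
apply: big1 => mm _; rewrite -scalerAl linearZ /=.
have E : (mdeg mm + e)%N != k by apply/eqP; lia.
by rewrite (pihomog_ne0 E (hX mm)) scaler0.
Qed.

Lemma mderiv_homog (d : nat) (f : S) (t : 'I_3) : f \is d.-homog ->
  mderiv t f \is (d.-1).-homog.
Proof.
move=> hf; rewrite (mpolyE f) linear_sum /= big_seq.
apply: rpred_sum => mm mmf; rewrite mderivZ /= mderivX; apply: rpredZ.
have dm : mdeg mm = d by apply: (dhomog_mf hf).
case: (posnP (mm t)) => [z|pos].
  by rewrite z scale0r rpred0.
apply: rpredZ; rewrite dhomogX; apply/eqP.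
have le : (U_(t) <= mm)%MM.
  apply/mnm_lepP => i; rewrite mnm1E; case: eqP => [<-|] //=.
have := submK le; move/(congr1 mdeg); rewrite mdegD mdeg1 dm => <-.
by rewrite addn1.
Qed.

End Poly.
Arguments pihomogM {F} k {e} g {h}.
Arguments mderiv_homog {F d f} t.

Section Lin.
Variable F : fieldType.
Local Notation S := {mpoly F[3]}.
Local Notation H k := (dhomog 3 F k).

Definition mkLin (U V : vectType F) (phi : U -> V) (lin : linear phi) : {linear U -> V} :=
  HB.pack_for {linear U -> V} phi (GRing.isLinear.Build F U V *:%R phi lin).
Definition mkHom (U V : vectType F) (phi : U -> V) (lin : linear phi) : 'Hom(U,V) :=
  linfun (@mkLin U V phi lin).
Lemma mkHomE (U V : vectType F) (phi : U -> V) (lin : linear phi) u :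
  @mkHom U V phi lin u = phi u.
Proof. by rewrite /mkHom lfunE. Qed.

Lemma rank_nullity (U V : vectType F) (h : 'Hom(U, V)) :
  (\dim (lker h) + \dim (limg h))%N = dim U.
Proof. by rewrite -dimvf -(limg_ker_dim h fullv) capvC capvf. Qed.

Lemma dim_img_le (U V : vectType F) (h : 'Hom(U, V)) (W : {vspace U}) :
  (\dim (h @: W) <= \dim W)%N.
Proof. by rewrite -(limg_ker_dim h W) leq_addl. Qed.

Lemma val_indhomog (p q : nat) (x : S) : x \is q.-homog ->
  val (indhomog p x : H p) = if q == p then x else 0.
Proof.
move=> hx; rewrite /indhomog /insubd; case: insubP => [u hu ->|hn] /=.
  case: eqP => // nqp.
  case: (eqVneq x 0) => // nz.
  by have := dhomog_uniq nz hx hu.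
case: eqP => [E|] //.
by rewrite -E hx in hn.
Qed.

Lemma lin_ind (a b e : nat) (c : S) : c \is e.-homog ->
  linear (fun g : H a => (indhomog b (val g * c) : H b)).
Proof.
move=> hc k x y; apply: val_inj.
rewrite /= !(@val_indhomog _ (a + e)); try by apply: dhomogM => //; rewrite ?rpredD ?rpredZ ?dhomog_is_dhomog.
case: eqP => _; last by rewrite scaler0 addr0.
by rewrite mulrDl -scalerAl.
Qed.

Lemma lin_indf (n a b e : nat) (c : 'I_n -> S) : (forall i, c i \is e.-homog) ->
  linear (fun g : H a => [ffun i => (indhomog b (val g * c i) : H b)]).
Proof.
move=> hc k x y; apply/ffunP => i; rewrite /= !ffunE.
exact: (@lin_ind a b e (c i) (hc i) k x y).
Qed.

End Lin.
Arguments mkHom {F U V phi} lin.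
Arguments mkHomE {F U V phi} lin u.
Arguments dim_img_le {F U V} h W.
Arguments rank_nullity {F U V} h.

Lemma binN x : (2 * 'C(x + 2, x) = (x + 2) * (x + 1))%N.
Proof.
elim: x => [|x IH]; first by [].
rewrite !addSn binS.
have -> : 'C((x + 2), x.+1) = (x + 2)%N.
  by rewrite addn2 binSn.
lia.
Qed.

Section Main.
Variable F : fieldType.
Local Notation S := {mpoly F[3]}.
Local Notation H k := (dhomog 3 F k).

Variables (f : S) (d r m M : nat) (rho : 'I_m -> 'I_3 -> S)
  (sigma : 'I_M -> 'I_m -> S) (eps : nat -> nat).
Hypothesis hf : f \is d.-homog.
Hypothesis hrho_gen : generates (D0 f) rho.
Hypothesis hrho_hom : forall j, hom_vec r (rho j).
Hypothesis hsig_gen : generates (syz rho) sigma.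
Hypothesis hsig_hom : forall j : 'I_M, hom_vec (eps j) (sigma j).

Lemma Phi_hom n (a : {ffun 'I_3 -> H n}) :
  \sum_(t < 3) val (a t) * mderiv t f \is (n + d.-1).-homog.
Proof.
apply: rpred_sum => t _; apply: dhomogM; first exact: dhomog_is_dhomog.
exact: mderiv_homog.
Qed.
Definition Phi n (a : {ffun 'I_3 -> H n}) : H (n + d.-1) := DHomog (@Phi_hom n a).
Lemma Phi_lin n : linear (@Phi n).
Proof.
move=> k x y; apply: val_inj => /=.
rewrite scaler_sumr -big_split /=; apply: eq_bigr => t _.
by rewrite !ffunE /= mulrDl scalerAl.
Qed.
Definition PhiH n := mkHom (@Phi_lin n).

Lemma Psi_hom p (h : {ffun 'I_m -> H p}) t :
  \sum_(j < m) val (h j) * rho j t \is (p + r).-homog.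
Proof.
apply: rpred_sum => j _; apply: dhomogM; first exact: dhomog_is_dhomog.
exact: hrho_hom.
Qed.
Definition Psi p (h : {ffun 'I_m -> H p}) : {ffun 'I_3 -> H (p + r)} :=
  [ffun t => DHomog (@Psi_hom p h t)].
Lemma Psi_lin p : linear (@Psi p).
Proof.
move=> k x y; apply/ffunP => t; rewrite /= !ffunE; apply: val_inj => /=.
rewrite scaler_sumr -big_split /=; apply: eq_bigr => j _.
by rewrite !ffunE /= mulrDl scalerAl.
Qed.
Definition PsiH p := mkHom (@Psi_lin p).

Definition MuH p (j : 'I_M) :=
  mkHom (@lin_indf F m (p - eps j) p (eps j) (sigma j) (hsig_hom j)).

Lemma MuE p (j : 'I_M) s i : (eps j <= p)%N -> val (MuH p j s i) = val s * sigma j i.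
Proof.
move=> le; rewrite mkHomE ffunE (@val_indhomog _ _ (p - eps j + eps j)).
  by rewrite subnK // eqxx.
by apply: dhomogM; [exact: dhomog_is_dhomog | exact: hsig_hom].
Qed.


Lemma jac_img p (w : H (p + r + d.-1)) :
  in_jac f (val w) <-> w \in limg (PhiH (p + r)).
Proof.
split.
  case=> g hg.
  pose a : {ffun 'I_3 -> H (p + r)} :=
    [ffun t => DHomog (pihomogP mdeg (p + r) (g t))].
  have -> : w = PhiH (p + r) a.
    apply: val_inj; rewrite mkHomE /=.
    rewrite -(pihomog_dE (dhomog_is_dhomog w)) hg linear_sum /=.
    apply: eq_bigr => t _.
    by rewrite (pihomogM _ _ (mderiv_homog t hf)) leq_addl addnK ffunE.
  exact: memv_img (memvf a).
case/memv_imgP => a _ ->; exists (fun t => val (a t)).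
by rewrite mkHomE.
Qed.

Lemma dim_quot p tau : quot_dim f (p + r + d.-1) tau ->
  (tau + \dim (limg (PhiH (p + r))))%N = dim (H (p + r + d.-1)).
Proof.
case=> q [hq [hspan hind]].
pose qq : tau.-tuple (H (p + r + d.-1)) := [tuple DHomog (hq i) | i < tau].
have qqE (i : 'I_tau) : val (qq`_i) = q i by rewrite -tnth_nth tnth_mktuple.
have valsum (c : 'I_tau -> F) : val (\sum_i c i *: qq`_i) = \sum_i c i *: q i.
  rewrite linear_sum /=; apply: eq_bigr => i _; by rewrite ?linearZ /= qqE.
have free_qq : free qq.
  apply/freeP => c hc i; apply: (hind c) => //.
  by rewrite -valsum hc; exists (fun _ => 0); rewrite big1 // => t _; rewrite mul0r.
have cap0 : (<<qq>> :&: limg (PhiH (p + r)) = 0)%VS.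
  apply/eqP; rewrite -subv0; apply/subvP => v; rewrite memv_cap memv0.
  case/andP => vQ vL.
  have [c vE] : exists c : 'I_tau -> F, v = \sum_i c i *: qq`_i.
    by exists (fun i => coord qq i v); exact: coord_span.
  move/jac_img: vL; rewrite vE valsum => /hind c0.
  by rewrite big1 // => i _; rewrite c0 scale0r.
have sumf : (<<qq>> + limg (PhiH (p + r)))%VS = fullv.
  apply/eqP; rewrite eqEsubv subvf /=; apply/subvP => w _.
  have [c hc] := hspan (val w) (dhomog_is_dhomog w).
  have hL : w - \sum_i c i *: qq`_i \in limg (PhiH (p + r)).
    by apply/jac_img; rewrite raddfB /= valsum.
  have -> : w = \sum_i c i *: qq`_i + (w - \sum_i c i *: qq`_i).
    by rewrite addrC subrK.
  apply: memv_add => //; apply: rpred_sum => i _; apply: memvZ.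
  by apply: memv_span; apply: mem_nth; rewrite size_tuple.
by rewrite -dimvf -sumf dimv_disjoint_sum // (eqP free_qq) size_tuple.
Qed.

Lemma kerPhi p : lker (PhiH (p + r)) = limg (PsiH p).
Proof.
apply/vspaceP => a; apply/idP/idP.
  rewrite memv_ker => /eqP h0.
  have hD : D0 f (fun t => val (a t)).
    by have := congr1 val h0; rewrite mkHomE /=.
  have [h hh] := hrho_gen.2 _ hD.
  pose b : {ffun 'I_m -> H p} := [ffun j => DHomog (pihomogP mdeg p (h j))].
  have -> : a = PsiH p b.
    apply/ffunP => t; apply: val_inj; rewrite mkHomE !ffunE /=.
    rewrite -(pihomog_dE (dhomog_is_dhomog (a t))) hh linear_sum /=.
    apply: eq_bigr => j _.
    by rewrite (pihomogM _ _ (hrho_hom j t)) leq_addl addnK ffunE.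
  exact: memv_img (memvf b).
case/memv_imgP => b _ ->; rewrite memv_ker; apply/eqP; apply: val_inj.
rewrite !mkHomE /=.
transitivity (\sum_(j < m) val (b j) * \sum_(t < 3) rho j t * mderiv t f).
  under eq_bigr => t _ do rewrite ffunE /= mulr_suml.
  rewrite exchange_big; apply: eq_bigr => j _; rewrite mulr_sumr.
  by apply: eq_bigr => t _; rewrite mulrA.
by rewrite big1 // => j _; rewrite (hrho_gen.1 j) mulr0.
Qed.

Lemma kerPsi p : (forall j : 'I_M, eps j <= p)%N ->
  lker (PsiH p) = (\sum_(j < M) limg (MuH p j))%VS.
Proof.
move=> hle; apply/vspaceP => b; apply/idP/idP.
  rewrite memv_ker => /eqP h0.
  have hS : syz rho (fun j => val (b j)).
    by move=> t; have := congr1 (fun z : {ffun 'I_3 -> H (p + r)} => val (z t)) h0; rewrite mkHomE !ffunE /=.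
  have [c hc] := hsig_gen.2 _ hS.
  pose s (j : 'I_M) : H (p - eps j) := DHomog (pihomogP mdeg (p - eps j) (c j)).
  have -> : b = \sum_(j < M) MuH p j (s j).
    apply/ffunP => i; apply: val_inj; rewrite sum_ffunE raddf_sum /=.
    rewrite -(pihomog_dE (dhomog_is_dhomog (b i))) hc linear_sum /=.
    apply: eq_bigr => j _.
    by rewrite MuE // (pihomogM _ _ (hsig_hom j i)) hle.
  by apply: memv_sumr => j _; exact: memv_img (memvf _).
case/memv_sumP => us hus ->.
rewrite memv_ker linear_sum /=; apply/eqP; apply: big1 => j _.
case/memv_imgP: (hus j isT) => s _ ->.
apply/ffunP => t; apply: val_inj; rewrite mkHomE !ffunE /=.
under eq_bigr => i _ do rewrite MuE // -mulrA.
by rewrite -mulr_sumr (hsig_gen.1 j t) mulr0.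
Qed.

Definition NR p := forall s : 'I_M -> S, (forall j, s j \is (p - eps j).-homog) ->
  (forall i, \sum_(j < M) s j * sigma j i = 0) -> forall j, s j = 0.

Lemma dim_direct p : (forall j : 'I_M, eps j <= p)%N -> NR p ->
  \dim (lker (PsiH p)) = (\sum_(j < M) 'C(p - eps j + 2, p - eps j))%N.
Proof.
move=> hle hNR; rewrite kerPsi //.
have inj j : lker (MuH p j) = 0%VS.
  apply/eqP; rewrite -subv0; apply/subvP => u; rewrite memv_ker memv0 => /eqP hu.
  pose s (j' : 'I_M) := if j' == j then val u else 0.
  have := hNR s _ _ j; rewrite /s eqxx -val_eqE /= => -> //.
    by move=> j'; case: eqP => [->|_]; [exact: dhomog_is_dhomog | exact: rpred0].
  move=> i; rewrite (bigD1 j) //= eqxx big1 => [|j' /negbTE ->]; last by rewrite mul0r.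
  rewrite addr0 -MuE //.
  by have := congr1 (fun z : {ffun 'I_m -> H p} => val (z i)) hu; rewrite ffunE.
have dimU j : \dim (limg (MuH p j)) = 'C(p - eps j + 2, p - eps j).
  by rewrite limg_dim_eq ?inj ?capv0 // dimvf.
have dx : directv (\sum_(j < M) limg (MuH p j)).
  apply/directv_sum_independent => us hus hsum j _.
  pose s (j : 'I_M) := val ((MuH p j)^-1%VF (us j)).
  have usE j' : us j' = MuH p j' ((MuH p j')^-1%VF (us j')).
    by rewrite limg_lfunVK // hus.
  have hs0 := hNR s (fun j => dhomog_is_dhomog _).
  have : s j = 0.
    apply: hs0 => i.
    have := congr1 (fun z : {ffun 'I_m -> H p} => val (z i)) hsum.
    rewrite sum_ffunE raddf_sum ffunE /= => h; apply: etrans h.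
    by apply: eq_bigr => j' _; rewrite [in RHS]usE MuE.
  move=> h; rewrite usE.
  have -> : (MuH p j)^-1%VF (us j) = 0 by apply: val_inj; rewrite /= -/(s j) h.
  by rewrite linear0.
rewrite (directvP dx) /=; apply: eq_bigr => j _; exact: dimU.
Qed.

Lemma dim_rel p p0 (s : 'I_M -> S) (j0 : 'I_M) :
  (forall j : 'I_M, eps j <= p0)%N -> (p0 <= p)%N ->
  (forall j, s j \is (p0 - eps j).-homog) ->
  (forall i, \sum_(j < M) s j * sigma j i = 0) -> s j0 != 0 ->
  (\dim (lker (PsiH p)) + 'C(p - p0 + 2, p - p0)
     <= \sum_(j < M) 'C(p - eps j + 2, p - eps j))%N.
Proof.
move=> hle0 hp hs hrel nz.
have hle (j : 'I_M) : (eps j <= p)%N by apply: leq_trans (hle0 j) hp.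
rewrite kerPsi //.
pose nu (j : 'I_M) := mkHom (@lin_ind F (p - p0) (p - eps j) (p0 - eps j) (s j) (hs j)).
have nuE (j : 'I_M) g : val (nu j g) = val g * s j.
  rewrite mkHomE (@val_indhomog _ _ (p - p0 + (p0 - eps j))).
    by have -> : (p - p0 + (p0 - eps j) == p - eps j)%N by apply/eqP; have := hle0 j; lia.
  by apply: dhomogM => //; exact: dhomog_is_dhomog.
pose W := limg (nu j0).
have lam_inj : lker (nu j0) = 0%VS.
  apply/eqP; rewrite -subv0; apply/subvP => g; rewrite memv_ker memv0 => /eqP hg.
  have : val g * s j0 = 0 by rewrite -nuE hg.
  move/eqP; rewrite mulf_eq0 (negbTE nz) orbF => /eqP hg0.
  by rewrite -val_eqE hg0.
have dimW : \dim W = 'C(p - p0 + 2, p - p0).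
  by rewrite /W limg_dim_eq ?lam_inj ?capv0 // dimvf.
pose Rest := (\sum_(j < M | j != j0) limg (MuH p j))%VS.
have h1 : (MuH p j0 @: W <= Rest)%VS.
  apply/subvP => x /memv_imgP [w /memv_imgP [g _ ->] ->].
  have -> : MuH p j0 (nu j0 g) = - \sum_(j < M | j != j0) MuH p j (nu j g).
    apply/ffunP => i; apply: val_inj.
    rewrite /= !ffunE raddfN sum_ffunE raddf_sum /= MuE // nuE.
    under eq_bigr => j _ do rewrite MuE // nuE -mulrA.
    have := hrel i; rewrite (bigD1 j0) //= => /(congr1 (fun z => val g * z)).
    rewrite mulr0 mulrDr mulr_sumr => /eqP; rewrite addr_eq0 => /eqP h.
    by rewrite -mulrA h.
  rewrite memvN; apply: memv_sumr => j _; exact: memv_img (memvf _).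
have sub : (\sum_(j < M) limg (MuH p j) <= MuH p j0 @: W^C + Rest)%VS.
  rewrite (bigD1 j0) //= -/Rest -(addv_complf W) limgD !subv_add.
  by rewrite addvSl addvSr (subv_trans h1) // addvSr.
have d1 := dimvS sub.
have d2 : (\dim (MuH p j0 @: W^C + Rest) <= \dim (MuH p j0 @: W^C) + \dim Rest)%N.
  exact: (dimv_add_leqif _ _).1.
have d3 := dim_img_le (MuH p j0) W^C%VS.
have d4 : \dim W^C = ('C(p - eps j0 + 2, p - eps j0) - \dim W)%N.
  by rewrite dimv_compl dimvf.
have d5 : (\dim Rest <= \sum_(j < M | j != j0) 'C(p - eps j + 2, p - eps j))%N.
  apply: leq_trans (dimv_leq_sum _ _ _) _; apply: leq_sum => j _.
  by have := dim_img_le (MuH p j) fullv; rewrite dimvf.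
have d6 : (\dim W <= 'C(p - eps j0 + 2, p - eps j0))%N.
  by have := dimvS (subvf W); rewrite dimvf.
rewrite [X in (_ <= X)%N](bigD1 j0) //=.
move: d1 d2 d3 d4 d5 d6; rewrite dimW /=.
set A := \dim _; set B := \dim _; set C := \dim _; set D := \dim _.
set E := \dim _.
set X := 'C(p - eps j0 + 2, _). set Y := 'C(p - p0 + 2, _). set Z := (\sum_(i < M | i != j0) _)%N. move=> k1 k2 k3 k4 k5 k6. lia.
Qed.

Lemma homog0_const (q : S) : q \is 0.-homog -> q = (q@_0)%:MP.
Proof.
move=> hq; apply/mpolyP => mm; rewrite mcoeffC.
case: (eqVneq mm 0%MM) => [->|nz]; first by rewrite mulr1.
rewrite mulr0; apply: (dhomog_nemf_coeff hq).
by rewrite mdeg_eq0.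
Qed.

Lemma eps_pos (hrho_irr : irredundant rho) (hsig_irr : irredundant sigma)
  (j : 'I_M) : (1 <= eps j)%N.
Proof.
rewrite lt0n; apply/negP => /eqP E.
have [i0 nz] : exists i0, sigma j i0 != 0.
  case: (pickP (fun i => sigma j i != 0)) => [i0 nz|all0]; first by exists i0.
  exfalso; apply: (hsig_irr j); exists (fun _ => 0); split => // t.
  rewrite big1 => [|k _]; last by rewrite mul0r.
  by move: (all0 t) => /negbFE /eqP.
pose c i := (sigma j i)@_0.
have sE i : sigma j i = (c i)%:MP.
  by apply: homog0_const; move: (hsig_hom j i); rewrite E.
have c0 : c i0 != 0.
  by apply/eqP => h; move: nz; rewrite sE h mpolyC0 eqxx.
apply: (hrho_irr i0).
exists (fun i => if i == i0 then 0 else (- (c i / c i0))%:MP); split.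
  by rewrite eqxx.
move=> t.
have hs := hsig_gen.1 j t.
move: hs; rewrite (bigD1 i0) //= => hs.
rewrite (bigD1 i0) //= eqxx mul0r add0r.
rewrite (eq_bigr (fun i => (- (c i / c i0)) *: rho i t)); last first.
  by move=> i /negbTE ->; rewrite mul_mpolyC.
move: hs; rewrite sE mul_mpolyC (eq_bigr (fun i => c i *: rho i t)); last first.
  by move=> i _; rewrite sE mul_mpolyC.
move=> hs.
have -> : rho i0 t = (c i0)^-1 *: (c i0 *: rho i0 t).
  by rewrite scalerA mulVf // scale1r.
have -> : c i0 *: rho i0 t = - \sum_(i < m | i != i0) c i *: rho i t.
  by apply/eqP; rewrite -addr_eq0 hs.
rewrite scalerN scaler_sumr -sumrN; apply: eq_bigr => i _.
by rewrite scalerA -scaleNr mulrC.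
Qed.

Lemma tau_eq p tau : quot_dim f (p + r + d.-1) tau ->
  (tau + 3 * 'C(p + r + 2, p + r) + \dim (lker (PsiH p))
   = 'C(p + r + d.-1 + 2, p + r + d.-1) + m * 'C(p + 2, p))%N.
Proof.
move=> hq; have h1 := @dim_quot p tau hq.
have h2 := rank_nullity (PhiH (p + r)).
have h3 := rank_nullity (PsiH p).
rewrite kerPhi in h2.
have e1 : dim (H (p + r + d.-1)) = 'C(p + r + d.-1 + 2, p + r + d.-1) by [].
have e2 : dim {ffun 'I_3 -> H (p + r)} = (3 * 'C(p + r + 2, p + r))%N.
  by change (#|'I_3| * 'C(p + r + 2, p + r) = 3 * 'C(p + r + 2, p + r))%N; rewrite card_ord.
have e3 : dim {ffun 'I_m -> H p} = (m * 'C(p + 2, p))%N.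
  by change (#|'I_m| * 'C(p + 2, p) = m * 'C(p + 2, p))%N; rewrite card_ord.
rewrite e1 in h1; rewrite e2 in h2; rewrite e3 in h3.
lia.
Qed.

Lemma core (hrho_irr : irredundant rho) (hsig_irr : irredundant sigma)
  (hmM : m = (M + 2)%N) (tau : nat) (htau : tjurina_number f tau) :
  (\sum_(j < M) eps j + d.-1 = 2 * r)%N /\ exists p,
  (2 * tau + 3 * ((p + r + 2) * (p + r + 1)) + M * ((p + 2) * (p + 1))
     + \sum_(j < M) eps j ^ 2
   = (p + r + d.-1 + 2) * (p + r + d.-1 + 1) + m * ((p + 2) * (p + 1))
     + (2 * p + 3) * \sum_(j < M) eps j)%N.
Proof.
have [k0 hk0] := htau.
set E1 := (\sum_(j < M) eps j)%N.
set E2 := (\sum_(j < M) eps j ^ 2)%N.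
have epsE (j : 'I_M) : (eps j <= E1)%N by rewrite /E1 (bigD1 j) //= leq_addr.
set P := (E1 + k0)%N.
have sumN p : (E1 <= p)%N ->
  (2 * \sum_(j < M) 'C(p - eps j + 2, p - eps j) + (2 * p + 3) * E1
   = M * ((p + 2) * (p + 1)) + E2)%N.
  move=> hp; rewrite /E1 /E2 big_distrr big_distrr /= -big_split /=.
  rewrite -[X in (_ = X * _ + _)%N]card_ord -sum_nat_const -big_split /=.
  apply: eq_bigr => j _; rewrite binN.
  have := epsE j; move: (eps j) => e he.
  have -> : p = ((p - e) + e)%N by lia.
  rewrite addnK; set y := (p - e)%N; timeout 25 nia.
have basic p : (P <= p)%N ->
  (tau + 3 * 'C(p + r + 2, p + r) + \dim (lker (PsiH p))
   = 'C(p + r + d.-1 + 2, p + r + d.-1) + m * 'C(p + 2, p))%N.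
  move=> hp; apply: tau_eq; apply: hk0; rewrite /P in hp; timeout 25 lia.
have hmul a b c : (b = c -> a * b = a * c)%N by move=> ->.
case: (classic (exists p0 (s : 'I_M -> S) (j0 : 'I_M),
    (forall j : 'I_M, eps j <= p0)%N /\ (forall j, s j \is (p0 - eps j).-homog) /\
    (forall i, \sum_(j < M) s j * sigma j i = 0) /\ s j0 != 0)).
  case=> p0 [s [j0 [hle0 [hs [hrel nz]]]]].
  exfalso.
  set B := (2 * tau + E2 + 3 * (r * r) + 6 * r + 4 * (p0 * r))%N.
  set q := (B + 4 * r + 1 + P)%N.
  set p := (p0 + q)%N.
  have hpP : (P <= p)%N by rewrite /p /q; timeout 25 lia.
  have hb := basic p hpP.
  have hr := @dim_rel p p0 s j0 hle0 (leq_addr _ _) hs hrel nz.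
  have hs2 := sumN p ltac:(rewrite /P in hpP; timeout 25 lia).
  rewrite /p addKn -/p in hr.
  have n1 := binN (p + r); have n2 := binN (p + r + d.-1); have n3 := binN p.
  have n4 := binN q.
  have n5 := hmul m _ _ n3.
  have n6 : (m * ((p + 2) * (p + 1)) = (M + 2) * ((p + 2) * (p + 1)))%N by rewrite hmM.
  have key0 : ((q + 2) * (q + 1) + 2 * (p * E1) + 3 * E1 + 2 * (p * d.-1)
      + (r + d.-1) * (r + d.-1) + 3 * d.-1
      <= 2 * tau + E2 + 4 * (p * r) + 3 * (r * r) + 6 * r)%N.
    move: hb hr hs2 n1 n2 n3 n4 n5 n6.
    set K1 := 'C(_ + 2, p + r). set K2 := 'C(_ + 2, p + r + d.-1).
    set K3 := 'C(_ + 2, p). set K4 := 'C(_ + 2, q). set D := \dim _.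
    set SN := (\sum_(j < M) _)%N.
    clearbody p q B; timeout 25 lia.
  have key : ((q + 2) * (q + 1) <= B + 4 * r * q)%N.
    apply: leq_trans (leq_trans _ key0) _; first by rewrite -!addnA leq_addr.
    rewrite /p mulnDl /B; timeout 25 lia.
  have h1 : (q * (B + 4 * r + 1) <= q * q)%N by apply: leq_mul => //; rewrite /q; timeout 25 lia.
  have h2 : (B <= q * B)%N by apply: leq_pmull; rewrite /q; timeout 25 lia.
  move: key h1 h2; clearbody q B; timeout 25 lia.
move=> hnot.
have hNR p : (E1 <= p)%N -> NR p.
  move=> hp s hs hrel j; apply/eqP; apply/negPn/negP => nz.
  apply: hnot; exists p, s, j; split => //.
  by move=> j'; apply: leq_trans (epsE j') hp.
have eqn p : (P <= p)%N ->
  (2 * tau + 3 * ((p + r + 2) * (p + r + 1)) + M * ((p + 2) * (p + 1)) + E2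
   = (p + r + d.-1 + 2) * (p + r + d.-1 + 1) + m * ((p + 2) * (p + 1))
     + (2 * p + 3) * E1)%N.
  move=> hp.
  have hE : (E1 <= p)%N by rewrite /P in hp; timeout 25 lia.
  have hb := basic p hp.
  rewrite dim_direct in hb; last first.
  - exact: hNR.
  - by move=> j; apply: leq_trans (epsE j) hE.
  have hs2 := sumN p hE.
  have n1 := binN (p + r); have n2 := binN (p + r + d.-1); have n3 := binN p.
  have n5 := hmul m _ _ n3.
  move: hb hs2 n1 n2 n3 n5.
  set K1 := 'C(_ + 2, p + r). set K2 := 'C(_ + 2, p + r + d.-1).
  set K3 := 'C(_ + 2, p). set SN := (\sum_(j < M) _)%N.
  timeout 25 lia.
split; last by exists P; apply: eqn.
have e1 := eqn P (leqnn _).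
have e2 := eqn P.+1 (leqnSn _).
have n6 : (m * ((P + 2) * (P + 1)) = (M + 2) * ((P + 2) * (P + 1)))%N by rewrite hmM.
have n7 : (m * ((P.+1 + 2) * (P.+1 + 1)) = (M + 2) * ((P.+1 + 2) * (P.+1 + 1)))%N by rewrite hmM.
move: e1 e2 n6 n7; set E1v := E1; clearbody E1v; timeout 60 lia.
Qed.

End Main.

Lemma half_dd a : (1 <= a)%N -> ((a.+1 * (a.+1 - 1)) %/ 2 = 'C(a - 1 + 2, a - 1))%N.
Proof.
case: a => [|a] // _.
have := binN a; rewrite !subSS subn0 /= => h.
have -> : (a.+2 * a.+1 = 2 * 'C(a + 2, a))%N by rewrite h; lia.
by rewrite mulKn // subn0.
Qed.

Theorem theorem3p4 (R : realType) (f : {mpoly R[i][3]}) (d r m : nat)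
  (rho : 'I_m -> 'I_3 -> {mpoly R[i][3]})
  (sigma : 'I_(m - 2) -> 'I_m -> {mpoly R[i][3]})
  (eps : nat -> nat) (tau : nat) :
  (3 <= d)%N ->
  reduced f ->
  ~ lines_through_point f d ->
  curve_type f d r m ->
  min_gens_D0 f r m rho ->
  (3 < m)%N ->
  ((2 * r)%N%:Z - d%:Z + 3) - m%:Z = 3 ->
  generates (syz rho) sigma ->
  irredundant sigma ->
  (forall j : 'I_(m - 2), hom_vec (eps j) (sigma j)) ->
  (forall i j : nat, (i <= j)%N -> (j < m - 2)%N -> (eps i <= eps j)%N) ->
  tjurina_number f tau ->
  let base : int := ((d * (d - 1)) %/ 2)%N%:Z + r%:Z * (d%:Z - r%:Z - 2) in
  (eps (m - 3)%N = 4%N /\ (forall j, (j < m - 3)%N -> eps j = 1%N)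
     /\ tau%:Z = base - 6)
  \/
  (eps (m - 3)%N = 3%N /\ eps (m - 4)%N = 2%N
     /\ (forall j, (j < m - 4)%N -> eps j = 1%N) /\ tau%:Z = base - 4)
  \/
  ((4 < m)%N /\ eps (m - 3)%N = 2%N /\ eps (m - 4)%N = 2%N /\ eps (m - 5)%N = 2%N
     /\ (forall j, (j < m - 5)%N -> eps j = 1%N) /\ tau%:Z = base - 3).
Proof.
move=> hd _ _ [hf _] [hrho_gen [hrho_irr hrho_hom]] hm3 hdelta hsig_gen hsig_irr
  hsig_hom hmon htau base.
have hmd : (m + d = 2 * r)%N by lia.
have hmM : m = (m - 2 + 2)%N by lia.
have [hE1 [p hp]] := @core _ f d r m (m - 2) rho sigma eps hf hrho_gen hrho_hom hsig_gen hsig_hom hrho_irr hsig_irr hmM tau htau.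
have hpos : forall j, (j < m - 2)%N -> (1 <= eps j)%N.
  move=> j hj; exact: (@eps_pos _ m (m - 2) rho sigma eps hsig_gen hsig_hom
    hrho_irr hsig_irr (Ordinal hj)).
move: hE1 hp; rewrite -!(big_mkord xpredT (fun j => eps j))
  -!(big_mkord xpredT (fun j => (eps j ^ 2)%N)).
set E1 := (\sum_(0 <= j < m - 2) eps j)%N.
set E2 := (\sum_(0 <= j < m - 2) eps j ^ 2)%N.
move=> hE1 hp.
have hE1' : E1 = (m - 2 + 3)%N by lia.
have hcomb := @comb eps (m - 2) ltac:(lia) hmon hpos hE1'.
rewrite /base; clear base.
case: d hd hf hrho_gen hsig_gen hmd hE1 hp hdelta => [|a] // hd hf hrho_gen hsig_gen hmd hE1 hp hdelta.
rewrite half_dd /= in hp hE1 *; last by lia.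
have hC := binN (a - 1).
rewrite (_ : (a - 1 + 1 = a)%N) in hC; last by lia.
set Cd := 'C(_, a - 1) in hC *.
have n6 : (m * ((p + 2) * (p + 1)) = (m - 2 + 2) * ((p + 2) * (p + 1)))%N by rewrite -hmM.
have hpr : (p * (2 * r) = p * (m - 2 + a + 3))%N by rewrite -hmd; congr (_ * _); lia.
have -> : (m - 3 = m - 2 - 1)%N by lia.
have -> : (m - 4 = m - 2 - 2)%N by lia.
have -> : (m - 5 = m - 2 - 3)%N by lia.
rewrite hE1' in hp.
case: hcomb => [[h1 [h2 h3]]|[[h1 [h2 [h3 h4]]]|[h0 [h1 [h2 [h3 [h4 h5]]]]]]].
- left; split => //; split => //.
  rewrite /E2 h3 in hp; move: hp n6 hpr hC hmd hmM hd; clear.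
  set M := (m - 2)%N; clearbody M. lia.
- right; left; split => //; split => //; split => //.
  rewrite /E2 h4 in hp; move: hp n6 hpr hC hmd hmM hd; clear.
  set M := (m - 2)%N; clearbody M. lia.
- right; right; split; first lia.
  do 4 (split => //).
  rewrite /E2 h5 in hp; move: hp n6 hpr hC hmd hmM hd; clear.
  set M := (m - 2)%N; clearbody M. lia.
Qed.
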